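(* Let $\Omega\subset\mathbb{R}^N$ be a bounded Lipschitz domain with outward unit normal $n$, let $A:\bar\Omega\to\mathcal{M}_{N\times N}(\mathbb{R})$ be a smooth uniformly elliptic matrix field, let $r\in C^{0,1}(\bar\Omega)$ with $r>0$, let $k\in C^{0,1}(\bar\Omega)$ with $k>0$, and let $p\ge1$. Let $\lambda_1$ be the first eigenvalue of $\nabla\cdot(A\nabla\,\cdot)+r$ with Neumann boundary condition and $\phi_1>0$ an associated eigenfunction ($\nabla\cdot(A\nabla\phi_1)+r\phi_1=-\lambda_1\phi_1$ in $\Omega$, $\partial_n\phi_1=0$ on $\partial\Omega$). If $\lambda_1<0$, then there exists $\mu>0$ such that $\mu\phi_1$ is a positive stationary solution of $$\frac{\partial u}{\partial t}=u\Big(r(x)-\int_\Omega k(y)|u(t,y)|^p\,dy\Big)+\nabla\cdot(A(x)\nabla u)\ \text{ in }(0,\infty)\times\Omega,\qquad\frac{\partial u}{\partial n}=0\ \text{ on }(0,\infty)\times\partial\Omega.$$ *)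

(* Defs.v *)
(* Classical (pointwise) formulation on R^N = 'rV[R]_N. *)
From HB Require Import structures.
From mathcomp Require Import all_boot all_order all_algebra.
From mathcomp Require Import all_classical all_reals all_analysis.
Set Implicit Arguments. Unset Strict Implicit. Unset Printing Implicit Defensive.
Import Order.TTheory GRing.Theory Num.Theory.
Import numFieldNormedType.Exports.
Local Open Scope classical_set_scope.
Local Open Scope ring_scope.

Section Defs.
Variables (R : realType) (N : nat).
Notation V := 'rV[R]_N.

Definition dotv (u v : V) : R := \sum_(i < N) u 0 i * v 0 i.
Definition enorm (v : V) : R := Num.sqrt (dotv v v).

(* Lipschitz continuity on a set S (any norm on R^N gives the same notion) *)
Definition lip_on (S : set V) (f : V -> R) : Prop :=
  exists L : R, forall x y, S x -> S y -> `|f x - f y| <= L * `|x - y|.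

(* topological boundary of an open set *)
Definition bdry (Om : set V) : set V := closure Om `\` Om.

(* Lipschitz boundary:
   near every boundary point, Om is (after choosing a unit direction e)
   the strict supergraph {y . y.e > gamma y} of a Lipschitz function gamma
   that does not depend on the e-component. *)
Definition lipschitz_boundary (Om : set V) : Prop :=
  forall x0, bdry Om x0 ->
  exists U : set V, [/\ open U, U x0 &
  exists e : V, enorm e = 1 /\
  exists gamma : V -> R, [/\ lip_on setT gamma,
     (forall y (t : R), gamma (y + t *: e) = gamma y) &
     Om `&` U = [set y | U y /\ gamma y < dotv y e]]].

Definition lipschitz_domain (Om : set V) : Prop :=
  [/\ open Om, connected Om, Om !=set0, bounded_set Om & lipschitz_boundary Om].

(* nu is an outward unit normal to Om at the boundary point x:
   Om has the tangent half-space {(y-x).nu < 0} at x. *)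
Definition outward_unit_normal (Om : set V) (x nu : V) : Prop :=
  bdry Om x /\ enorm nu = 1 /\
  forall eps : R, 0 < eps -> exists2 delta : R, 0 < delta &
    forall y, 0 < enorm (y - x) < delta ->
      (dotv (y - x) nu < - eps * enorm (y - x) -> Om y) /\
      (eps * enorm (y - x) < dotv (y - x) nu -> ~ Om y).

Definition partial (j : 'I_N) (u : V -> R) : V -> R :=
  fun x => 'D_(delta_mx 0 j) u x.

Definition iter_dir_deriv (vs : seq V) (f : V -> R) : V -> R :=
  foldr (fun v g => 'D_v g) f vs.

Definition smooth_on_closure (Om : set V) (A : V -> 'M[R]_N) : Prop :=
  exists2 W : set V, open W /\ closure Om `<=` W &
    forall (i j : 'I_N) (vs : seq V) x, W x ->
      differentiable (iter_dir_deriv vs (fun y => A y i j)) x.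

Definition uniformly_elliptic (Om : set V) (A : V -> 'M[R]_N) : Prop :=
  exists2 theta : R, 0 < theta &
    forall x (xi : V), closure Om x ->
      theta * dotv xi xi <= \sum_(i < N) \sum_(j < N) A x i j * xi 0 i * xi 0 j.

Definition flux (A : V -> 'M[R]_N) (u : V -> R) (i : 'I_N) : V -> R :=
  fun y => \sum_(j < N) A y i j * partial j u y.
Definition divA (A : V -> 'M[R]_N) (u : V -> R) : V -> R :=
  fun x => \sum_(i < N) partial i (flux A u i) x.

Definition classical_reg (Om : set V) (A : V -> 'M[R]_N) (u : V -> R) : Prop :=
  {within closure Om, continuous u} /\
  forall x, Om x -> differentiable u x /\ forall i, differentiable (flux A u i) x.

(* homogeneous Neumann condition: at every boundary point where an outward
   unit normal nu exists, the (one-sided) normal derivative vanishes *)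
Definition neumann (Om : set V) (u : V -> R) : Prop :=
  forall x nu, outward_unit_normal Om x nu ->
    (fun h : R => (u x - u (x - h *: nu)) / h) @ 0^'+ --> 0.

(* Lebesgue integral over R^N, written as an iterated integral
   (for the non-negative integrands used here this is the N-dimensional
   Lebesgue integral, by Tonelli). *)
Fixpoint iter_int (n : nat) : ('rV[R]_n -> \bar R) -> \bar R :=
  match n with
  | 0 => fun g => g 0
  | n'.+1 => fun g => (\int[@lebesgue_measure R]_(t in setT)
              iter_int (fun y : 'rV[R]_n' => g (row_mx (\row_(_ < 1) t) y)))%E
  end.

Definition dom_int (Om : set V) (g : V -> R) : R :=
  fine (iter_int (fun y : V => (\1_Om y * g y)%:E)).

Definition neumann_eigenpair (Om : set V) (A : V -> 'M[R]_N) (r : V -> R)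
    (lam : R) (phi : V -> R) : Prop :=
  [/\ classical_reg Om A phi, exists2 x, Om x & phi x != 0,
      (forall x, Om x -> divA A phi x + r x * phi x = - lam * phi x)
    & neumann Om phi].

Definition first_neumann_eigenvalue (Om : set V) (A : V -> 'M[R]_N) (r : V -> R)
    (lam : R) : Prop :=
  (exists phi, neumann_eigenpair Om A r lam phi) /\
  forall l phi, neumann_eigenpair Om A r l phi -> lam <= l.

Definition nonlocal_solution (Om : set V) (A : V -> 'M[R]_N) (r k : V -> R)
    (p : R) (u : R -> V -> R) : Prop :=
  forall t : R, 0 < t ->
    [/\ classical_reg Om A (u t),
        (forall x, Om x ->
           derivable (fun s => u s x) t 1 /\
           'D_1 (fun s => u s x) t =
             u t x * (r x - dom_int Om (fun y => k y * (`|u t y| `^ p)))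
             + divA A (u t) x)
      & neumann Om (u t)].

Definition positive_stationary_solution (Om : set V) (A : V -> 'M[R]_N)
    (r k : V -> R) (p : R) (U : V -> R) : Prop :=
  nonlocal_solution Om A r k p (fun _ => U) /\ forall x, Om x -> 0 < U x.

End Defs.

(* Main.v *)
Require Import Defs.
From HB Require Import structures.
From mathcomp Require Import all_boot all_order all_algebra.
From mathcomp Require Import all_classical all_reals all_analysis.
From mathcomp Require Import ring lra.
Import Order.TTheory GRing.Theory Num.Theory.
Import numFieldNormedType.Exports.
Local Open Scope classical_set_scope.
Local Open Scope ring_scope.
Import HBNNSimple.
Lemma DZ (R : realType) (V : normedModType R) (f : V -> R) (c : R) x v :
  c != 0 -> 'D_v (fun y => c * f y) x = c * 'D_v f x.
Proof.
move=> c0.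
have [df|ndf] := pselect (derivable f x v).
  exact: (deriveZ c df).
have ndf' : ~ derivable (fun y => c * f y) x v.
  move=> dcf; apply: ndf.
  have := derivableZ (k := c^-1) dcf.
  have -> : (c^-1 \*: (fun y : V => c * f y)) = f.
    apply/funext => y /=. rewrite /GRing.scale /=. rewrite mulrA mulVf // mul1r //.
  done.
rewrite /derive /lim /lim_in.
rewrite [LHS]getPN; last first.
  by move=> l hl; apply: ndf'; apply/cvg_ex; exists l.
rewrite [X in _ * X]getPN ?mulr0 //.
by move=> l hl; apply: ndf; apply/cvg_ex; exists l.
Qed.
Section nm.
Local Open Scope ereal_scope.
Context d (T : measurableType d) (R : realType).
Variable mu : {measure set T -> \bar R}.

Lemma integralZ_nm (c : R) (F : T -> \bar R) : (0 < c)%R -> (forall x, 0 <= F x) ->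
  \int[mu]_(x in setT) (c%:E * F x) = c%:E * \int[mu]_(x in setT) F x.
Proof.
move=> c0 F0.
have cF0 : forall x, 0 <= c%:E * F x by move=> x; rewrite mule_ge0 // lee_fin ltW.
rewrite !ge0_integralTE //.
rewrite -ereal_supZl; last 2 first.
- apply/set0P; exists 0; exists nnsfun0 => //; exact: sintegral0.
- exact: ltW.
congr ereal_sup; apply/seteqP; split => z /=.
- move=> [h hh <-].
  have ci0 : (0 <= c^-1)%R by rewrite invr_ge0 ltW.
  exists (sintegral mu (scale_nnsfun h ci0)).
    exists (scale_nnsfun h ci0) => // x /=.
    rewrite EFinM -(@lee_pmul2l _ c%:E) ?lte_fin // muleA -EFinM mulfV ?gt_eqF // mul1r.
    exact: hh.
  rewrite -sintegralrM; apply: eq_sintegral => x /=.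
  by rewrite mulrA mulfV ?gt_eqF // mul1r.
- move=> [w [h hh <-] <-].
  exists (scale_nnsfun h (ltW c0)).
    move=> x /=; rewrite EFinM lee_pmul2l ?lte_fin //; exact: hh.
  by rewrite -sintegralrM.
Qed.

Lemma le_integral_nm (F G : T -> \bar R) : (forall x, 0 <= F x) ->
  (forall x, F x <= G x) ->
  \int[mu]_(x in setT) F x <= \int[mu]_(x in setT) G x.
Proof.
move=> F0 FG; have G0 : forall x, 0 <= G x by move=> x; exact: le_trans (FG x).
rewrite !ge0_integralTE //.
apply: le_ereal_sup => z /= [h hh <-]; exists h => // x; exact: le_trans (FG x).
Qed.
End nm.

Section it.
Variable R : realType.
Local Notation leb := (@lebesgue_measure R).

Lemma int_itv (v a b : R) (bb : bool * bool) : 0 <= v -> a <= b ->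
  (\int[leb]_(t in setT) (v * \1_([set` Interval (BSide bb.1 a) (BSide bb.2 b)]) t)%:E
   = (v * (b - a))%:E)%E.
Proof.
move=> v0 ab.

rewrite (@integralZl_indic _ _ _ leb _ measurableT (fun=> [set` Interval (BSide bb.1 a) (BSide bb.2 b)]) v) //; last first.
  by move=> /lt_le_trans /(_ v0); rewrite ltxx.
rewrite integral_indic //= ?setIT ?lebesgue_measure_itv /=.
rewrite lte_fin; have [ab'|ab'] := ltP a b; first by rewrite -EFinD -EFinM.
have -> : b = a by apply/le_anti; rewrite ab ab'.
by rewrite subrr mulr0 mule0.
Qed.

Lemma iter_int_ge0 n (g : 'rV[R]_n -> \bar R) :
  (forall y, 0 <= g y)%E -> (0 <= iter_int g)%E.
Proof.
elim: n g => [|n IH] g g0 /=; first exact: g0.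
by apply: integral_ge0 => t _; apply: IH => y; exact: g0.
Qed.

Lemma iter_intZ (n : nat) (c : R) (g : 'rV[R]_n -> \bar R) :
  0 < c -> (forall y, (0 <= g y)%E) ->
  iter_int (fun y => (c%:E * g y)%E) = (c%:E * iter_int g)%E.
Proof.
move=> c0; elim: n g => [|n IH] g g0 //=.
rewrite (_ : (fun t => iter_int (fun y => c%:E * g (row_mx (\row_(_ < 1) t) y)))%E =
   (fun t => c%:E * iter_int (fun y => g (row_mx (\row_(_ < 1) t) y)))%E).
  apply: integralZ_nm => // t; apply: iter_int_ge0 => y; exact: g0.
by apply/funext => t; apply: IH => y; exact: g0.
Qed.

Lemma rm0 n (t : R) (y : 'rV[R]_n) : (row_mx (\row_(_ < 1) t) y : 'rV_n.+1) 0 ord0 = t.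
Proof.
have -> : (ord0 : 'I_n.+1) = lshift n (ord0 : 'I_1) by apply: val_inj.
by etransitivity; [exact: row_mxEl | rewrite mxE].
Qed.

Lemma rmS n (t : R) (y : 'rV[R]_n) j : (row_mx (\row_(_ < 1) t) y : 'rV_n.+1) 0 (lift ord0 j) = y 0 j.
Proof.
have -> : lift ord0 j = rshift 1 j by apply: val_inj.
exact: row_mxEr.
Qed.

Lemma iter_int_lb n (g : 'rV[R]_n -> \bar R) (a b : 'I_n -> R) (c : R) :
  (forall i, a i < b i) -> 0 <= c -> (forall y, (0 <= g y)%E) ->
  (forall y : 'rV[R]_n, (forall i, a i < y 0 i < b i) -> (c%:E <= g y)%E) ->
  ((c * \prod_i (b i - a i))%:E <= iter_int g)%E.
Proof.
elim: n g a b c => [|n IH] g a b c hab c0 g0 hg.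
  by rewrite big_ord0 mulr1 /=; apply: hg => -[].
rewrite big_ord_recl /=.
set P' := \prod_(i < n) _.
have P'0 : 0 <= P' by apply: prodr_ge0 => i _; rewrite subr_ge0 ltW.
have hF : forall t, ((c * P' * \1_([set` Interval (BSide false (a ord0)) (BSide true (b ord0))]) t)%:E
     <= iter_int (fun y => g (row_mx (\row_(_ < 1) t) y)))%E.
  move=> t; have [ht|ht] := boolP (a ord0 < t < b ord0).
    rewrite indicE mem_set ?mulr1; last by rewrite /= in_itv /= ht.
    apply: (IH _ (fun i => a (lift ord0 i)) (fun i => b (lift ord0 i))) => //.
    - move=> y hy; apply: hg => i; case: (unliftP ord0 i) => [j ->|->].
        by rewrite rmS.
      by rewrite rm0.
  rewrite indicE memNset ?mulr0; last by rewrite /= in_itv /= (negbTE ht).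
  by apply: iter_int_ge0 => y; exact: g0.
apply: le_trans (@le_integral_nm _ _ _ leb _ _ _ hF); last first.
  by move=> t; rewrite lee_fin mulr_ge0 // mulr_ge0.
rewrite (@int_itv _ _ _ (false, true)) ?mulr_ge0 //; last exact: ltW.
by rewrite lee_fin [_ * P']mulrC mulrA.
Qed.

Lemma iter_int_ub n (g : 'rV[R]_n -> \bar R) (a b : 'I_n -> R) (C : R) :
  (forall i, a i <= b i) -> 0 <= C ->
  (forall y : 'rV[R]_n, (forall i, a i <= y 0 i <= b i) -> (g y <= C%:E)%E) ->
  (forall y : 'rV[R]_n, ~ (forall i, a i <= y 0 i <= b i) -> (g y <= 0)%E) ->
  (forall y, (0 <= g y)%E) ->
  (iter_int g <= (C * \prod_i (b i - a i))%:E)%E.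
Proof.
elim: n g a b C => [|n IH] g a b C hab C0 hin hout g0.
  by rewrite big_ord0 mulr1 /=; apply: hin => -[].
rewrite big_ord_recl /=.
set P' := \prod_(i < n) _.
have P'0 : 0 <= P' by apply: prodr_ge0 => i _; rewrite subr_ge0.
have hF : forall t, (iter_int (fun y => g (row_mx (\row_(_ < 1) t) y)) <=
     (C * P' * \1_([set` Interval (BSide true (a ord0)) (BSide false (b ord0))]) t)%:E)%E.
  move=> t; have [ht|ht] := boolP (a ord0 <= t <= b ord0).
    rewrite indicE mem_set ?mulr1; last by rewrite /= in_itv /= ht.
    apply: (IH _ (fun i => a (lift ord0 i)) (fun i => b (lift ord0 i))) => //.
    - move=> y hy; apply: hin => i; case: (unliftP ord0 i) => [j ->|->].
        by rewrite rmS.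
      by rewrite rm0.
    - move=> y hy; apply: hout => hall; apply: hy => i.
      by have := hall (lift ord0 i); rewrite rmS.
  rewrite indicE memNset ?mulr0; last by rewrite /= in_itv /= (negbTE ht).
  apply: le_trans (IH _ (fun i => a (lift ord0 i)) (fun i => b (lift ord0 i)) 0 _ _ _ _ _) _ => //.
  - move=> y hy; apply: hout => hall.
    by move: ht; have := hall ord0; rewrite rm0 => ->.
  - move=> y hy; apply: hout => hall.
    by move: ht; have := hall ord0; rewrite rm0 => ->.
  - by rewrite mul0r.
apply: le_trans (@le_integral_nm _ _ _ leb _ _ _ hF) _.
  by move=> t; apply: iter_int_ge0 => y; exact: g0.
rewrite (@int_itv _ _ _ (true, false)) ?mulr_ge0 //.
by rewrite lee_fin -mulrA [P' * _]mulrC.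
Qed.
End it.
Lemma coord_le (R : realType) n (x : 'rV[R]_n) i : `|x 0 i| <= `|x|.
Proof.
rewrite [X in _ <= X]mx_normrE.
exact: (@le_bigmax_cond _ _ _ 0 ((0 : 'I_1), i) xpredT (fun ij => `|x ij.1 ij.2|)).
Qed.

Lemma coord_lt (R : realType) n (x : 'rV[R]_n) e : 0 < e ->
  (forall i, `|x 0 i| < e) -> `|x| < e.
Proof.
move=> e0 h; rewrite [X in X < _]mx_normrE.
apply: bigmax_lt => // -[i j] _ /=.
by rewrite (ord1 i).
Qed.
Lemma bnd_closure (R : realType) N (Om : set 'rV[R]_N) : bounded_set Om ->
  exists2 M : R, 0 < M & forall x, closure Om x -> `|x| <= M.
Proof.
move=> [M [Mreal hM]].
have hp : 0 < `|M| + 1 by have := normr_ge0 M; lra.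
have M1 : M < `|M| + 1 by apply: le_lt_trans (real_ler_norm Mreal) _; rewrite ltrDl.
exists (`|M| + 1) => //.
have sub : Om `<=` closed_ball (0 : 'rV[R]_N) (`|M| + 1).
  move=> x Ox; rewrite closed_ballE; last by [].
  by rewrite /closed_ball_ /= sub0r normrN; exact: (hM _ M1 x Ox).
move=> x /(closureS sub).
rewrite -(proj1 (closure_id _) (@closed_closure _ _)) -/(closed_ball _ _) closed_ballE //.
by rewrite /closed_ball_ /= sub0r normrN.
Qed.

Lemma compact_closure (R : realType) N (Om : set 'rV[R]_N) : bounded_set Om ->
  compact (closure Om).
Proof.
move=> hb; have [M M0 hM] := @bnd_closure _ _ _ hb.
apply: bounded_closed_compact; last exact: closed_closure.
exists M; split; first exact: num_real.
move=> M' hM' x hx; apply: le_trans (hM x hx) _; exact: ltW.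
Qed.

Lemma loc_lb (R : realType) N (Om : set 'rV[R]_N) (k phi : 'rV[R]_N -> R) x0 :
  open Om -> Om x0 -> 0 < phi x0 -> 0 < k x0 -> lip_on (closure Om) k ->
  {within closure Om, continuous phi} ->
  exists2 r : R, 0 < r & forall y, `|y - x0| < r ->
    [/\ Om y, phi x0 / 2 < phi y & k x0 - k x0 / 2 <= k y].
Proof.
move=> oOm Ox0 p0 k0 [L hL] hc.
have nO : nbhs x0 Om by apply: open_nbhs_nbhs; split.
have [e1 e10 he1] := (nbhs_ballP _ _).1 nO.
have hint : (closure Om)° x0.
  by rewrite /interior; apply: filterS nO; exact: subset_closure.
have cph : phi @ x0 --> phi x0.
  have := continuous_subspaceW (@subset_closure _ Om) hc.
  by rewrite continuous_open_subspace // => /(_ x0 (mem_set Ox0)).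
have hz : phi x0 / 2 < phi x0 by lra.
have [e2 e20 he2] := (nbhs_ballP _ _).1 (cvgr_gt _ cph _ hz).
pose d := k x0 / (2 * (`|L| + 1)).
have L1 : 0 < `|L| + 1 by have := normr_ge0 L; lra.
have d0 : 0 < d by rewrite divr_gt0 // mulr_gt0.
exists (Num.min (Num.min e1 e2) d); first by rewrite !lt_min e10 e20 d0.
move=> y; rewrite !lt_min => /andP[/andP[ye1 ye2] yd].
have b1 : ball x0 e1 y by rewrite -ball_normE /ball_ /= distrC.
have b2 : ball x0 e2 y by rewrite -ball_normE /ball_ /= distrC.
have Oy := he1 _ b1.
split => //; first exact: he2.
have := hL y x0 (subset_closure Oy) (subset_closure Ox0).
have : L * `|y - x0| <= (`|L| + 1) * `|y - x0|.
  by apply: ler_wpM2r; [exact: normr_ge0 | have := real_ler_norm (num_real L); lra].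
have : (`|L| + 1) * `|y - x0| <= (`|L| + 1) * d by apply: ler_wpM2l; [exact: ltW | exact: ltW].
have -> : (`|L| + 1) * d = k x0 / 2.
  rewrite /d; field; rewrite gt_eqF //.
move=> h1 h2 h3; move: (le_trans h3 (le_trans h2 h1)); rewrite ler_norml => /andP[h _].
lra.
Qed.

Lemma half_pos (R : realFieldType) (a : R) : 0 < a -> 0 < a - a / 2 /\ 0 < a / 2.
Proof. move=> a0; split; lra. Qed.

Lemma itv_aux1 (R : realFieldType) (a r : R) : 0 < r -> a - r < a + r.
Proof. move=> r0; lra. Qed.

Lemma itv_aux2 (R : realFieldType) (a r y : R) : a - r < y < a + r -> `|y - a| < r.
Proof. move=> /andP[h1 h2]; rewrite ltr_norml; apply/andP; split; lra. Qed.

Lemma itv_aux3 (R : realFieldType) (a b : R) : a / 2 < b -> a / 2 <= b.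
Proof. move=> h; lra. Qed.

Lemma KI (R : realType) (N : nat) (Om : set 'rV[R]_N)
  (k phi : 'rV[R]_N -> R) (p : R) :
  lipschitz_domain Om -> 0 <= p ->
  lip_on (closure Om) k -> (forall x, closure Om x -> 0 < k x) ->
  {within closure Om, continuous phi} ->
  (forall x, Om x -> 0 < phi x) ->
  exists2 j : R, 0 < j &
    iter_int (fun y => (\1_Om y * (k y * `|phi y| `^ p))%:E) = j%:E.
Proof.
move=> [oOm _ [x0 Ox0] hb _] p0 hk kpos hc phipos.
have hk' := hk; move: hk => [L hL].
set g := fun y => (\1_Om y * (k y * `|phi y| `^ p))%:E.
have g0 : forall y, (0 <= g y)%E.
  move=> y; rewrite lee_fin; have [yO|yO] := boolP (y \in Om);
    rewrite indicE; last by rewrite (negbTE yO) mul0r.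
  rewrite yO mul1r.
  apply: mulr_ge0; last exact: powR_ge0.
  by apply/ltW/kpos/subset_closure; move: yO; rewrite inE.
have [M M0 hM] := @bnd_closure _ _ _ hb.
have cpt := @compact_closure _ _ _ hb.
have ne : closure Om !=set0 by exists x0; exact: subset_closure.
have [c cin hcmax] := EVT_max_rV ne cpt hc.
have phile : forall y, Om y -> phi y <= phi c.
  by move=> y Oy; apply: hcmax; apply: mem_set; exact: subset_closure.
have kle : forall y, Om y -> k y <= k x0 + `|L| * (M + M).
  move=> y Oy; have := hL y x0 (subset_closure Oy) (subset_closure Ox0).
  have h1 : L * `|y - x0| <= `|L| * `|y - x0|.
    by apply: ler_wpM2r; [exact: normr_ge0 | exact: real_ler_norm (num_real L)].
  have h2 : `|y - x0| <= M + M.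
    apply: le_trans (ler_normB _ _) _.
    by apply: lerD; apply: hM; apply: subset_closure.
  have h3 : `|L| * `|y - x0| <= `|L| * (M + M) by apply: ler_wpM2l => //; exact: normr_ge0.
  move=> h; have := le_trans h (le_trans h1 h3); rewrite ler_norml => /andP[_ h'].
  lra.
set C := (k x0 + `|L| * (M + M)) * phi c `^ p.
have C0 : 0 <= C by apply: mulr_ge0; [apply: le_trans (kle x0 Ox0); exact/ltW/kpos/subset_closure | exact: powR_ge0].
have boxO : forall y, Om y -> forall i : 'I_N, - M <= y 0 i <= M.
  move=> y Oy i; rewrite -ler_norml; apply: le_trans (@coord_le _ _ y i) _.
  by apply: hM; apply: subset_closure.
have ub := @iter_int_ub R N g (fun=> - M) (fun=> M) C.
have ub' : (iter_int g <= (C * \prod_(i < N) (M - - M))%:E)%E.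
  apply: ub => //.
  - by move=> i; have := ltW M0; lra.
  - move=> y _; rewrite /g lee_fin; have [yO|yO] := boolP (y \in Om);
      rewrite indicE; last by rewrite (negbTE yO) mul0r.
    rewrite yO mul1r; move: yO; rewrite inE => Oy.
    apply: ler_pM.
    + exact/ltW/kpos/subset_closure.
    + exact: powR_ge0.
    + exact: kle.
    + apply: ge0_ler_powR => //; rewrite ?nnegrE ?normr_ge0 //.
        by apply: le_trans (ltW (phipos y Oy)) (phile y Oy).
      by rewrite gtr0_norm ?phipos // phile.
  - move=> y hy; rewrite /g lee_fin indicE memNset ?mul0r //.
    by move=> Oy; apply: hy; exact: boxO.
have [r r0 hr] := @loc_lb _ _ _ _ _ _ oOm Ox0 (phipos x0 Ox0) (kpos x0 (subset_closure Ox0)) hk' hc.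
set cl := (k x0 - k x0 / 2) * (phi x0 / 2) `^ p.
have k0 := kpos x0 (subset_closure Ox0).
have ph0 := phipos x0 Ox0.
have [hk1 hk2] := @half_pos _ _ k0.
have [hp1 hp2] := @half_pos _ _ ph0.
have cl0 : 0 < cl by apply: mulr_gt0 => //; apply: powR_gt0.
have lb := @iter_int_lb R N g (fun i => x0 0 i - r) (fun i => x0 0 i + r) cl.
have lb' : ((cl * \prod_(i < N) ((x0 0 i + r) - (x0 0 i - r)))%:E <= iter_int g)%E.
  apply: lb => //.
  - by move=> i; apply: itv_aux1.
  - exact: ltW.
  - move=> y hy.
    have yx : `|y - x0| < r.
      by apply: (@coord_lt R) => // i; rewrite !mxE; apply: itv_aux2.
    have [Oy hphi hky] := hr y yx.
    rewrite /g lee_fin indicE mem_set // mul1r.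
    apply: ler_pM.
    + exact: ltW.
    + apply: powR_ge0.
    + exact: hky.
    + apply: ge0_ler_powR => //; rewrite ?nnegrE ?normr_ge0 //; first exact: ltW.
      by rewrite gtr0_norm ?phipos //; exact: ltW.
have P0 : 0 < cl * \prod_(i < N) ((x0 0 i + r) - (x0 0 i - r)).
  by apply: mulr_gt0 => //; apply: prodr_gt0 => i _; rewrite subr_gt0 itv_aux1.
move: lb' ub'; case: (iter_int g) => [x| |] //= h1 h2.
by exists x => //; apply: lt_le_trans P0 _; rewrite -lee_fin.
Qed.

Theorem lemma3p1 (R : realType) (N : nat) (Om : set 'rV[R]_N)
  (A : 'rV[R]_N -> 'M[R]_N) (r k : 'rV[R]_N -> R) (p : R)
  (lam1 : R) (phi1 : 'rV[R]_N -> R) :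
  lipschitz_domain Om ->
  smooth_on_closure Om A -> uniformly_elliptic Om A ->
  lip_on (closure Om) r -> (forall x, closure Om x -> 0 < r x) ->
  lip_on (closure Om) k -> (forall x, closure Om x -> 0 < k x) ->
  1 <= p ->
  first_neumann_eigenvalue Om A r lam1 ->
  neumann_eigenpair Om A r lam1 phi1 ->
  (forall x, Om x -> 0 < phi1 x) ->
  lam1 < 0 ->
  exists2 mu : R, 0 < mu &
    positive_stationary_solution Om A r k p (fun x => mu * phi1 x).
Proof.
move=> hOm _ _ _ _ hk kpos p1 _ [[hc hd] _ heq hneu] phipos lamneg.
have p0 : 0 < p by apply: lt_le_trans p1.
have [j j0 hj] := @KI R N Om k phi1 p hOm (ltW p0) hk kpos hc phipos.
pose mu := (- lam1 / j) `^ (p^-1).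
have mu0 : 0 < mu by apply: powR_gt0; rewrite divr_gt0 // oppr_gt0.
have mup : mu `^ p = - lam1 / j.
  by rewrite /mu -powRrM mulVf ?gt_eqF // powRr1 // ltW // divr_gt0 // oppr_gt0.
have mun0 : mu != 0 by rewrite gt_eqF.
have hI : dom_int Om (fun y => k y * `|mu * phi1 y| `^ p) = - lam1.
  rewrite /dom_int.
  have -> : (fun y => (\1_Om y * (k y * `|mu * phi1 y| `^ p))%:E) =
     (fun y => ((mu `^ p)%:E * (\1_Om y * (k y * `|phi1 y| `^ p))%:E)%E).
    apply/funext => y; rewrite -EFinM; congr EFin.
    rewrite normrM (gtr0_norm mu0) powRM ?normr_ge0 ?ltW // /=.
    by ring.
  rewrite iter_intZ; last 2 first.
  - by apply: powR_gt0.
  - move=> y; rewrite lee_fin; have [yO|yO] := boolP (y \in Om);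
      rewrite indicE; last by rewrite (negbTE yO) mul0r.
    rewrite yO mul1r.
    apply: mulr_ge0; last exact: powR_ge0.
    by apply/ltW/kpos/subset_closure; move: yO; rewrite inE.
  have -> : ((mu `^ p)%:E * iter_int (fun y => (\1_Om y * (k y * `|phi1 y| `^ p))%:E) = (mu `^ p)%:E * j%:E)%E.
    by congr (_ * _)%E; exact: hj.
  by rewrite -EFinM /= mup divfK ?gt_eqF.
have hD : forall (f : 'rV[R]_N -> R) v x, 'D_v (fun y => mu * f y) x = mu * 'D_v f x.
  by move=> f v x; apply: DZ.
have hflux : forall i, flux A (fun y => mu * phi1 y) i = (fun y => mu * flux A phi1 i y).
  move=> i; apply/funext => y; rewrite /flux mulr_sumr; apply: eq_bigr => j' _.
  by rewrite /partial hD mulrCA.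
have hdiv : divA A (fun y => mu * phi1 y) = (fun x => mu * divA A phi1 x).
  apply/funext => x; rewrite /divA mulr_sumr; apply: eq_bigr => i _.
  by rewrite hflux /partial hD.
exists mu => //; split; last first.
  by move=> x Ox; rewrite mulr_gt0 // phipos.
move=> t t0; split.
- split.
    move=> x; apply: cvgM; [exact: cvg_cst | exact: hc].
  move=> x Ox; have [dphi dfl] := hd x Ox; split.
    exact: differentiableZ.
  move=> i; rewrite hflux.
  exact: differentiableZ.
- move=> x Ox; split; first exact: derivable_cst.
  rewrite derive_cst hI hdiv.
  have -> : divA A phi1 x = - lam1 * phi1 x - r x * phi1 x by rewrite -(heq x Ox) addrK.
  ring.
- move=> x nu hn.
  have -> : (fun h : R => (mu * phi1 x - mu * phi1 (x - h *: nu)) / h) =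
     (fun h : R => mu * ((phi1 x - phi1 (x - h *: nu)) / h)).
    by apply/funext => h; rewrite -mulrBr mulrA.
  rewrite -[X in _ --> X](mulr0 mu); apply: cvgM; [exact: cvg_cst | exact: hneu x nu hn].
Qed.
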